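(* Let $d:[0,1]^2\to\mathbb{R}$ be a convex function and let $\ell_1,\dots,\ell_t$ be an $\epsilon$-approximate family of $d$. Let $\mathcal{C}\subset[0,1]^2$ be a point set. For each $i$, let $(x_i^*,y_i^* )=\arg\max_{\mathbf{p}\in\mathcal{C}}\ell_i(\mathbf{p}_x,\mathbf{p}_y)$, and let $(x^*,y^* )$ be the point $(x_i^*,y_i^* )$ maximizing $\ell_i(x_i^*,y_i^* )$ over $i=1,\dots,t$. Let $d^*=\sup_{\mathbf{p}\in\mathcal{C}}d(\mathbf{p}_x,\mathbf{p}_y)$, $d_{\inf}=\inf_{\mathbf{q}\in[0,1]^2}d(\mathbf{q}_x,\mathbf{q}_y)$, and $m=\max(l^U(x^*,y^* ),d_{\inf})$. Then $$m\le d^*\le m+\epsilon.$$ If instead $\ell_1,\dots,\ell_t$ is a relative $\epsilon$-approximate family of $d$ (with the same definitions of $x_i^*,y_i^*,x^*,y^*,d^*,d_{\inf},m$), then $$m\le d^*\le(1+\epsilon)m.$$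
   Context: A linear function is $\ell(x,y)=a_1x+a_2y+a_3$. For linear functions $\ell_1,\dots,\ell_t$, their upper envelope is $l^U(x,y)=\max_{i\le t}\ell_i(x,y)$. The collection $\ell_1,\dots,\ell_t$ is an $\epsilon$-approximate family of $d$ if $l^U(x,y)\le d(x,y)\le l^U(x,y)+\epsilon$ for all $(x,y)\in[0,1]^2$; it is a relative $\epsilon$-approximate family of $d$ if $l^U(x,y)\le d(x,y)\le(1+\epsilon)l^U(x,y)$ for all $(x,y)\in[0,1]^2$. *)

(* Defs.v *)
From HB Require Import structures.
From mathcomp Require Import all_boot all_order all_algebra.
From mathcomp Require Import all_classical all_reals.
Set Implicit Arguments. Unset Strict Implicit. Unset Printing Implicit Defensive.
Import Order.TTheory GRing.Theory Num.Theory.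
Local Open Scope ring_scope.
Local Open Scope classical_set_scope.

Section Defs.
Variable R : realType.

Definition square : set (R * R) :=
  [set p | 0 <= p.1 <= 1 /\ 0 <= p.2 <= 1].

Definition lin (a : R * R * R) (x y : R) : R := a.1.1 * x + a.1.2 * y + a.2.

Definition upper_env (t : nat) (ell : 'I_t -> R * R * R) (x y : R) : R :=
  sup [set lin (ell i) x y | i in [set: 'I_t]].

Definition convex_on_square (d : R -> R -> R) : Prop :=
  forall p q : R * R, square p -> square q -> forall a : R, 0 <= a <= 1 ->
    d (a * p.1 + (1 - a) * q.1) (a * p.2 + (1 - a) * q.2)
    <= a * d p.1 p.2 + (1 - a) * d q.1 q.2.

Definition approx_family (t : nat) (ell : 'I_t -> R * R * R) (d : R -> R -> R) (eps : R) : Prop :=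
  forall p : R * R, square p ->
    upper_env ell p.1 p.2 <= d p.1 p.2 <= upper_env ell p.1 p.2 + eps.

Definition rel_approx_family (t : nat) (ell : 'I_t -> R * R * R) (d : R -> R -> R) (eps : R) : Prop :=
  forall p : R * R, square p ->
    upper_env ell p.1 p.2 <= d p.1 p.2 <= (1 + eps) * upper_env ell p.1 p.2.

End Defs.

(* Main.v *)
Require Import Defs.
From HB Require Import structures.
From mathcomp Require Import all_boot all_order all_algebra.
From mathcomp Require Import all_classical all_reals.
From mathcomp Require Import lra.
Import Order.TTheory GRing.Theory Num.Theory.
Local Open Scope ring_scope.
Local Open Scope classical_set_scope.

Lemma lin_le_env (R : realType) (t : nat) (ell : 'I_t -> R * R * R) x y i :
  lin (ell i) x y <= upper_env ell x y.
Proof.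
rewrite /upper_env; apply: ub_le_sup; last by exists i.
exists (\sum_j `|lin (ell j) x y|) => _ [j _ <-].
rewrite (bigD1 j) //=; apply: le_trans (ler_norm _) _.
by rewrite lerDl sumr_ge0.
Qed.

Lemma lin_lb (R : realType) (a : R * R * R) x y :
  0 <= x <= 1 -> 0 <= y <= 1 -> - `|a.1.1| - `|a.1.2| + a.2 <= lin a x y.
Proof.
move=> /andP[x0 x1] /andP[y0 y1]; rewrite /lin.
have h1 : - `|a.1.1| <= a.1.1 * x.
  have := ler_norm (a.1.1); have := ler_norm (- a.1.1);
  rewrite normrN => h1 h2; nra.
have h2 : - `|a.1.2| <= a.1.2 * y.
  have := ler_norm (a.1.2); have := ler_norm (- a.1.2);
  rewrite normrN => h3 h4; nra.
lra.
Qed.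

Theorem lemma4p1 (R : realType) (d : R -> R -> R) (t : nat)
  (ell : 'I_t -> R * R * R) (eps : R) (C : set (R * R))
  (ps : 'I_t -> R * R) (istar : 'I_t) :
  0 < eps ->
  convex_on_square d ->
  finite_set C -> C `<=` @square R ->
  (* ps i = (x_i, y_i) is an argmax of l_i over C *)
  (forall i, C (ps i) /\
     forall p, C p -> lin (ell i) p.1 p.2 <= lin (ell i) (ps i).1 (ps i).2) ->
  (* (xs, ys) = ps istar, where istar maximizes l_i(ps i) *)
  (forall i, lin (ell i) (ps i).1 (ps i).2
             <= lin (ell istar) (ps istar).1 (ps istar).2) ->
  let xs := (ps istar).1 in let ys := (ps istar).2 in
  let dstar := sup [set d p.1 p.2 | p in C] in
  let dinf := inf [set d q.1 q.2 | q in @square R] in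
  let m := Num.max (upper_env ell xs ys) dinf in
  (approx_family ell d eps -> m <= dstar /\ dstar <= m + eps) /\
  (rel_approx_family ell d eps -> m <= dstar /\ dstar <= (1 + eps) * m).
Proof.
move=> eps0 _ _ Csq hps hstar xs ys dstar dinf m.
set U := upper_env ell xs ys.
have F2 : forall p, C p -> upper_env ell p.1 p.2 <= U.
  move=> p Cp; apply: (le_trans _ (@lin_le_env _ _ ell xs ys istar)).
  apply: ge_sup; first by exists (lin (ell istar) p.1 p.2), istar.
  move=> _ [i _ <-]; apply: (le_trans _ (hstar i)).
  by apply: (proj2 (hps i)).
have Cs : C (xs, ys) by rewrite /xs /ys -surjective_pairing; exact: (proj1 (hps istar)).
have sqs : square (xs, ys) by exact: Csq.
set K := - `|(ell istar).1.1| - `|(ell istar).1.2| + (ell istar).2.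
have F4 : forall q, @square R q -> K <= upper_env ell q.1 q.2.
  move=> q [hx hy]; apply: (le_trans _ (@lin_le_env _ _ ell _ _ istar)).
  exact: lin_lb.
have Udm : U <= m by rewrite /m le_max lexx.
have common : (forall q, square q -> upper_env ell q.1 q.2 <= d q.1 q.2) ->
   forall B, (forall p, C p -> d p.1 p.2 <= B) -> m <= dstar /\ dstar <= B.
  move=> hd B hB.
  have hub : has_ubound [set d p.1 p.2 | p in C].
    by exists B => _ [p Cp <-]; exact: hB.
  have ds : d xs ys <= dstar by apply: (ub_le_sup hub); exists (xs, ys).
  split; last by apply: ge_sup; [exists (d xs ys), (xs, ys) | move=> _ [p Cp <-]; exact: hB].
  rewrite /m ge_max; apply/andP; split.
    by apply: (le_trans _ ds); exact: (hd (xs, ys) sqs).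
  apply: (le_trans _ ds); apply: ge_inf; last by exists (xs, ys).
  by exists K => _ [q sq <-]; apply: le_trans (F4 q sq) (hd q sq).
split.
  move=> hA; apply: common; first by move=> q sq; case/andP: (hA q sq).
  move=> p Cp; case/andP: (hA p (Csq p Cp)) => _ h.
  by apply: le_trans h _; rewrite lerD2r; apply: le_trans (F2 p Cp) Udm.
move=> hA; apply: common; first by move=> q sq; case/andP: (hA q sq).
move=> p Cp; case/andP: (hA p (Csq p Cp)) => _ h.
apply: le_trans h _; rewrite ler_pM2l; last by lra.
exact: le_trans (F2 p Cp) Udm.
Qed.
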